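(* Let $T$ be an MFQST under either the explicit bound or the node-weighted strategy. Let $x$ be any node of $T$, let $u$ be any in-neighbour of $x$ and let $y$ be the out-neighbour of $x$, with $u\ne x\ne y$. Then the angle $\angle uxy$ is at least $90^\circ$.
   Context: Let $Z=\{z_1,\dots,z_n\}\subset\mathbb{R}^2$ ($n\ge 1$) be a set of sources and $z_{BS}\in\mathbb{R}^2\setminus Z$ a sink; each source has supply $1$. A flow-dependent quadratic Steiner tree (FQST) consists of a finite set $S\subset\mathbb{R}^2$ of Steiner points and a tree $T$ with vertex set $Z\cup S\cup\{z_{BS}\}$ whose edges are directed towards $z_{BS}$. Every node other than the sink has exactly one out-edge, and the sink has none. Each edge $e$ carries a positive flow $f(e)$ such that: - at each source, the flow on its out-edge minus the total flow on its in-edges equals $1$; - at each Steiner point, the out-flow equals the total in-flow; - the sink receives total flow $n$. The cost is $L(T)=\sum_{e\in E(T)} f(e)|e|^2$. In-neighbours of a node are the tails of its in-edges; its out-neighbour is the head of its out-edge. MFQSTs under the two strategies: - Explicit bound $k$: an MFQST minimises $L$ among FQSTs with $|S|\le k$. - Node-weighted with cost $c>0$: an MFQST minimises $L_c(T)=L(T)+c|S|$ over all FQSTs. No degree restrictions are imposed in either case. *)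

(* Defs.v *)
From mathcomp Require Import all_boot.
From Stdlib Require Import Reals.

Set Implicit Arguments.
Unset Strict Implicit.
Unset Printing Implicit Defensive.

Local Open Scope R_scope.

Definition point := (R * R)%type.

Definition dot (a b : point) : R := a.1 * b.1 + a.2 * b.2.
Definition vsub (a b : point) : point := (a.1 - b.1, a.2 - b.2).
Definition dist2 (a b : point) : R := dot (vsub a b) (vsub a b).
Definition norm (a : point) : R := sqrt (dot a a).

Definition angle (u x y : point) : R :=
  acos (dot (vsub u x) (vsub y x) / (norm (vsub u x) * norm (vsub y x))).

(* Nodes of an FQST with n sources and m Steiner points:
   None = the sink z_BS, Some (inl i) = source z_i, Some (inr j) = Steiner point j. *)
Definition node (n m : nat) := option ('I_n + 'I_m)%type.

Definition sink {n m : nat} : node n m := None.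

(* Every non-sink node v has exactly one out-edge v -> par v,
   carrying flow fl v; the sink has no out-edge (par sink is irrelevant).
   The graph is a tree directed towards the sink: iterating par from any
   node reaches the sink.  Steiner points are pairwise distinct and distinct
   from the sources and the sink (S is a set and the vertex set is
   Z ∪ S ∪ {z_BS}). *)
Record FQST (n : nat) (Z : 'I_n -> point) (zBS : point) := {
  nS : nat;
  spos : 'I_nS -> point;
  par : node n nS -> node n nS;
  fl : node n nS -> R;
  spos_inj : injective spos;
  spos_notZ : forall j i, spos j <> Z i;
  spos_notsink : forall j, spos j <> zBS;
  par_reach : forall v, exists k, iter k par v = sink;
  fl_pos : forall v, v != sink -> 0 < fl v;
  fl_source : forall i : 'I_n,
      fl (Some (inl i)) - \big[Rplus/0]_(w | (w != sink) && (par w == Some (inl i))) fl w = 1;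
  fl_steiner : forall j : 'I_nS,
      fl (Some (inr j)) = \big[Rplus/0]_(w | (w != sink) && (par w == Some (inr j))) fl w;
  fl_sink : \big[Rplus/0]_(w | (w != sink) && (par w == sink)) fl w = INR n
}.

Arguments nS {n Z zBS} f.
Arguments spos {n Z zBS} f _.
Arguments par {n Z zBS} f _.
Arguments fl {n Z zBS} f _.

Definition npos {n} {Z : 'I_n -> point} {zBS} (T : FQST Z zBS) (v : node n (nS T)) : point :=
  match v with
  | None => zBS
  | Some (inl i) => Z i
  | Some (inr j) => spos T j
  end.
Arguments npos {n Z zBS} T v.

Definition cost {n} {Z : 'I_n -> point} {zBS} (T : FQST Z zBS) : R :=
  \big[Rplus/0]_(v | v != sink) (fl T v * dist2 (npos T v) (npos T (par T v))).

Definition cost_c {n} {Z : 'I_n -> point} {zBS} (c : R) (T : FQST Z zBS) : R :=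
  cost T + c * INR (nS T).

Definition MFQST_bound {n} {Z : 'I_n -> point} {zBS} (k : nat) (T : FQST Z zBS) : Prop :=
  leq (nS T) k /\ forall T' : FQST Z zBS, leq (nS T') k -> cost T <= cost T'.

Definition MFQST_weighted {n} {Z : 'I_n -> point} {zBS} (c : R) (T : FQST Z zBS) : Prop :=
  forall T' : FQST Z zBS, cost_c c T <= cost_c c T'.

(* Main.v *)
From HB Require Import structures.
Require Import Defs.
From mathcomp Require Import all_boot.
From Stdlib Require Import Reals Lra Psatz.
Local Open Scope R_scope.

HB.instance Definition _ := Monoid.isComLaw.Build R 0 Rplus (fun a b c => esym (Rplus_assoc a b c)) Rplus_comm Rplus_0_l.

Lemma acos_nonpos r : r <= 0 -> PI / 2 <= acos r.
Proof.
move=> hr; rewrite /acos.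
case: Rle_dec => [_|h1]; first by have := PI_RGT_0; lra.
case: Rle_dec => [h|h2]; first lra.
have h3 : 0 < sqrt (1 - r²).
  apply: sqrt_lt_R0; rewrite /Rsqr; nra.
have : r / sqrt (1 - r²) <= 0.
  rewrite /Rdiv; have := Rinv_0_lt_compat _ h3; nra.
case/Rle_lt_or_eq_dec => h.
- have := atan_increasing _ _ h; rewrite atan_0; lra.
- rewrite h atan_0; lra.
Qed.

Lemma angle_ge u x y : dot (vsub u x) (vsub y x) <= 0 -> PI / 2 <= angle u x y.
Proof.
move=> h; apply: acos_nonpos.
have h1 : 0 <= norm (vsub u x) by apply: sqrt_pos.
have h2 : 0 <= norm (vsub y x) by apply: sqrt_pos.
have h3 := Rmult_le_pos _ _ h1 h2.
rewrite /Rdiv; case: (Rle_lt_or_eq_dec _ _ h3) => h4.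
- have := Rinv_0_lt_compat _ h4; nra.
- rewrite -h4 Rinv_0; lra.
Qed.

Lemma sum2 (I : finType) (P : pred I) (F G : I -> R) (a b : I) :
  P a -> P b -> a != b -> (forall w, P w -> w != a -> w != b -> F w = G w) ->
  \big[Rplus/0]_(w | P w) F w =
  \big[Rplus/0]_(w | P w) G w + (F a - G a) + (F b - G b).
Proof.
move=> Pa Pb ab hFG.
rewrite (bigD1 a Pa) (bigD1 b) /=; last by rewrite Pb eq_sym.
rewrite [in RHS](bigD1 a Pa) [in RHS](bigD1 b) /=; last by rewrite Pb eq_sym.
rewrite (eq_bigr G); first by lra.
by move=> w /andP[/andP[h0 h1] h2]; apply: hFG.
Qed.
Definition pteq (p q : point) : bool :=
  if Req_dec_T p.1 q.1 then (if Req_dec_T p.2 q.2 then true else false) else false.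

Lemma pteqP p q : reflect (p = q) (pteq p q).
Proof.
rewrite /pteq; case: p q => [p1 p2] [q1 q2] /=.
case: Req_dec_T => h1; case: Req_dec_T => h2 //=; constructor; try congruence.
all: by case.
Qed.

Lemma avoid (I : finType) (i0 : I) (f : I -> point) (m a : point) :
  a <> (0, 0) ->
  exists s, 0 <= s < 1 /\ forall i, (m.1 + s * a.1, m.2 + s * a.2) <> f i.
Proof.
move=> ha.
set N := #|I|.
pose s (k : 'I_N.+1) := INR k / INR N.+1.
pose pt (k : 'I_N.+1) := (m.1 + s k * a.1, m.2 + s k * a.2).
have hN : 0 < INR N.+1 by apply: lt_0_INR; apply/ltP.
have hs k : 0 <= s k < 1.
  have h1 := pos_INR k.
  have h2 : INR k < INR N.+1 by apply: lt_INR; apply/ltP; exact: ltn_ord.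
  have h3 := Rinv_0_lt_compat _ hN.
  have h4 : INR N.+1 * / INR N.+1 = 1 by apply: Rinv_r; lra.
  rewrite /s /Rdiv; split; nra.
case: (boolP [exists k, [forall i, ~~ pteq (pt k) (f i)]]).
  case/existsP => k /forallP hk; exists (s k); split => // i hi.
  by move: (hk i); rewrite /pt hi; case: pteqP.
rewrite negb_exists => /forallP hall.
have hex k : exists i, pteq (pt k) (f i).
  move: (hall k); rewrite negb_forall => /existsP [i]; rewrite negbK => h; by exists i.
pose g k := odflt i0 [pick i | pteq (pt k) (f i)].
have hg k : pt k = f (g k).
  rewrite /g; case: pickP => [i /pteqP //|h0].
  by case: (hex k) => i; rewrite h0.
have ginj : injective g.
  move=> k1 k2 e.
  have e2 : pt k1 = pt k2 by rewrite hg e -hg.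
  have es : s k1 = s k2.
    case: e2 => e21 e22.
    case: (Req_dec_T a.1 0) => h1.
    - case: (Req_dec_T a.2 0) => h2.
      + by case: ha; case: a h1 h2 {e21 e22 pt hg hall hex g e} => /= ? ? -> ->.
      + apply: (Rmult_eq_reg_r a.2) => //; lra.
    - apply: (Rmult_eq_reg_r a.1) => //; lra.
  apply: val_inj; apply: INR_eq.
  move: es; rewrite /s => es.
  have := Rmult_eq_compat_r (INR N.+1) _ _ es.
  rewrite /Rdiv !Rmult_assoc Rinv_l ?Rmult_1_r //; lra.
have := leq_card g ginj; rewrite card_ord -/N; by rewrite ltnn.
Qed.
Section Dist.
Local Open Scope nat_scope.
Variables (n : nat) (Z : 'I_n -> point) (zBS : point) (T : FQST Z zBS).

Lemma reach_b v : exists k, iter k (par T) v == sink.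
Proof. by case: (@par_reach _ _ _ T v) => k hk; exists k; apply/eqP. Qed.

Definition dist v := ex_minn (reach_b v).

Lemma dist_spec v : iter (dist v) (par T) v = sink.
Proof. rewrite /dist; case: ex_minnP => k /eqP //. Qed.

Lemma dist_min v k : iter k (par T) v = sink -> leq (dist v) k.
Proof. rewrite /dist; case: ex_minnP => m _ h hk; apply: h; exact/eqP. Qed.

Lemma dist_lt v : v != sink -> leq (dist (par T v)).+1 (dist v).
Proof.
move=> hv.
have h0 : dist v <> 0%N.
  move=> e; have := dist_spec v; rewrite e /= => e'; by rewrite e' eqxx in hv.
have : iter (dist v).-1 (par T) (par T v) = sink.
  by rewrite -iterSr prednK ?dist_spec // lt0n; apply/eqP.
move/dist_min => h; apply: leq_ltn_trans h _.
by rewrite prednK // lt0n; apply/eqP.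
Qed.

Lemma reach_strong (P : node n (nS T) -> Prop) :
  (forall v, (forall w, leq (dist w).+1 (dist v) -> P w) -> P v) -> forall v, P v.
Proof.
move=> H v.
have : forall d v, leq (dist v) d -> P v.
  elim=> [|d IH] w hw; apply: H => w' hw'.
  - by move: hw; rewrite leqn0 => /eqP e; rewrite e in hw'.
  - apply: IH; by rewrite -ltnS (leq_trans hw' hw).
by move=> /(_ (dist v) v (leqnn _)).
Qed.

End Dist.
Arguments dist_lt {n Z zBS T v}.
Arguments dist {n Z zBS T} v.

Lemma L1 (a b c : R) : a - c - (b - c) = a - b. Proof. ring. Qed.
Lemma L2 (a b : R) : a - (b - 0) = a - b. Proof. ring. Qed.

Section Reroute.
Variables (n : nat) (Z : 'I_n -> point) (zBS : point) (T : FQST Z zBS).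
Variables (u x : node n (nS T)).
Hypotheses (hu : u != sink) (hx : x != sink) (hux : par T u = x)
  (hlt : fl T u < fl T x).

Let y := par T x.

Lemma xu : x != u.
Proof.
apply/eqP => e; have := dist_lt hu; rewrite hux e ltnn //.
Qed.

Lemma yu : y != u.
Proof.
apply/eqP => e; have h1 := dist_lt hu; have h2 := dist_lt hx.
rewrite hux in h1; rewrite -/y e in h2; have := ltn_trans h1 h2; by rewrite ltnn.
Qed.

Lemma yx : y != x.
Proof. apply/eqP => e; have h2 := dist_lt hx; rewrite -/y e ltnn // in h2. Qed.

Definition par' w := if w == u then y else par T w.
Definition fl' w := if w == x then fl T x - fl T u else fl T w.

Lemma flow' z :
  \big[Rplus/0]_(w | (w != sink) && (par' w == z)) fl' w =
  \big[Rplus/0]_(w | (w != sink) && (par T w == z)) fl T w - (if z == x then fl T u else 0).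
Proof.
rewrite !big_mkcondr.
rewrite (@sum2 _ (fun w => w != sink) _ (fun w => if par T w == z then fl T w else 0) u x) //;
  last first.
- move=> w _ h1 h2; by rewrite /par' /fl' (negbTE h1) (negbTE h2).
- by rewrite eq_sym xu.
rewrite /par' /fl' eqxx (negbTE xu) (eq_sym u x) (negbTE xu) hux -/y eqxx.
set S := (\big[Rplus/0]_(w | w != sink) (if par T w == z then fl T w else 0)).
case: (z =P x) => [e|hzx].
  rewrite e (negbTE yx) eqxx; lra.
have -> : (x == z) = false by apply/eqP => e; apply: hzx.
case: (y == z); lra.
Qed.

Lemma reach' v : exists k, iter k par' v = sink.
Proof.
elim/(@reach_strong _ _ _ T): v => v IH.
case: (v =P sink) => [->|/eqP hv]; first by exists O.
case: (v =P u) => [e|/eqP hvu].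
- have hy : leq (dist y).+1 (dist v).
    rewrite e; apply: ltn_trans (dist_lt hx) _; rewrite -hux; exact: dist_lt.
  case: (IH _ hy) => k hk; exists k.+1; by rewrite iterSr /par' e eqxx.
- have hy := dist_lt hv.
  case: (IH _ hy) => k hk; exists k.+1; by rewrite iterSr /par' (negbTE hvu).
Qed.

Lemma flpos' v : v != sink -> 0 < fl' v.
Proof.
move=> hv; rewrite /fl'; case: (v =P x) => _; last exact: fl_pos.
lra.
Qed.

Lemma flsource' i :
  fl' (Some (inl i)) - \big[Rplus/0]_(w | (w != sink) && (par' w == Some (inl i))) fl' w = 1.
Proof.
rewrite flow' /fl' -(fl_source T i).
case: eqP => [e|_]; [rewrite -e; by rewrite L1|by rewrite L2].
Qed.

Lemma flsteiner' j :
  fl' (Some (inr j)) = \big[Rplus/0]_(w | (w != sink) && (par' w == Some (inr j))) fl' w.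
Proof.
rewrite flow' /fl'.
case: eqP => [e|_]; [rewrite -e; by rewrite (@fl_steiner _ _ _ T j)|by rewrite (@fl_steiner _ _ _ T j) Rminus_0_r].
Qed.

Lemma flsink' : \big[Rplus/0]_(w | (w != sink) && (par' w == sink)) fl' w = INR n.
Proof.
rewrite flow' -(@fl_sink _ _ _ T) eq_sym (negbTE hx); lra.
Qed.

Definition T' : FQST Z zBS :=
  @Build_FQST n Z zBS (nS T) (spos T) par' fl' (@spos_inj _ _ _ T)
    (@spos_notZ _ _ _ T) (@spos_notsink _ _ _ T) reach' flpos' flsource' flsteiner' flsink'.

Lemma cost_T' : cost T' = cost T - 2 * fl T u * dot (vsub (npos T u) (npos T x)) (vsub (npos T y) (npos T x)).
Proof.
have hnp : forall v, npos T' v = npos T v by case=> [[i|j]|].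
rewrite /cost.
have -> : \big[Rplus/0]_(v | v != sink) (fl T' v * dist2 (npos T' v) (npos T' (par T' v))) =
   \big[Rplus/0]_(v | v != sink) (fl' v * dist2 (npos T v) (npos T (par' v))).
  by apply: eq_bigr => v _; rewrite !hnp.
rewrite (@sum2 _ (fun w => w != sink) _ (fun v => fl T v * dist2 (npos T v) (npos T (par T v))) u x) //;
  last first.
- move=> w _ h1 h2; by rewrite /par' /fl' (negbTE h1) (negbTE h2).
- by rewrite eq_sym xu.
rewrite /par' /fl' eqxx (negbTE xu) (eq_sym u x) (negbTE xu) hux -/y eqxx.
set S := (\big[Rplus/0]_(w | w != sink) _).
rewrite /dist2 /dot /vsub /=.
ring.
Qed.

Lemma reroute_better :
  0 < dot (vsub (npos T u) (npos T x)) (vsub (npos T (par T x)) (npos T x)) ->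
  exists T'' : FQST Z zBS, nS T'' = nS T /\ cost T'' < cost T.
Proof.
move=> hd; exists T'; split => //; rewrite cost_T'.
have := fl_pos hu; rewrite /y; nra.
Qed.

End Reroute.

Lemma sum_ge1 (I : finType) (P : pred I) (F : I -> R) a :
  P a -> (forall w, P w -> 0 <= F w) -> F a <= \big[Rplus/0]_(w | P w) F w.
Proof.
move=> Pa h; rewrite (bigD1 a Pa) /=.
have : 0 <= \big[Rplus/0]_(w | P w && (w != a)) F w.
  apply: (big_ind (fun r => 0 <= r)); [lra|move=> *; lra|].
  by move=> w /andP[hw _]; apply: h.
lra.
Qed.

Lemma sum_ge2 (I : finType) (P : pred I) (F : I -> R) a b :
  P a -> P b -> a != b -> (forall w, P w -> 0 <= F w) ->
  F a + F b <= \big[Rplus/0]_(w | P w) F w.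
Proof.
move=> Pa Pb ab h; rewrite (bigD1 a Pa) /=.
have : F b <= \big[Rplus/0]_(w | P w && (w != a)) F w.
  apply: sum_ge1; first by rewrite Pb eq_sym.
  by move=> w /andP[hw _]; apply: h.
lra.
Qed.

Definition midp (U Y : point) : point := ((U.1 + Y.1)/2, (U.2 + Y.2)/2).
Definition avec (U X Y : point) : point := (X.1 - (midp U Y).1, X.2 - (midp U Y).2).
Definition mvp (U X Y : point) (s : R) : point :=
  ((midp U Y).1 + s * (avec U X Y).1, (midp U Y).2 + s * (avec U X Y).2).

Lemma avec_nz U X Y : 0 < dot (vsub U X) (vsub Y X) -> avec U X Y <> (0, 0).
Proof.
rewrite /avec /midp /dot /vsub /= => h [e1 e2].
have h1 : X.1 = (U.1 + Y.1) / 2 by lra.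
have h2 : X.2 = (U.2 + Y.2) / 2 by lra.
rewrite h1 h2 in h.
have e : (U.1 - (U.1 + Y.1) / 2) * (Y.1 - (U.1 + Y.1) / 2) +
  (U.2 - (U.2 + Y.2) / 2) * (Y.2 - (U.2 + Y.2) / 2) = - ((U.1 - Y.1)^2 + (U.2 - Y.2)^2) / 4 by field.
rewrite e in h; have := pow2_ge_0 (U.1 - Y.1); have := pow2_ge_0 (U.2 - Y.2); lra.
Qed.

Lemma geom_lt U X Y s : 0 <= s < 1 -> 0 < dot (vsub U X) (vsub Y X) ->
  dist2 U (mvp U X Y s) + dist2 (mvp U X Y s) Y < dist2 U X + dist2 X Y.
Proof.
move=> hs h.
have ha := avec_nz _ _ _ h.
have hpos : 0 < (avec U X Y).1 ^ 2 + (avec U X Y).2 ^ 2.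
  case: (Req_dec_T (avec U X Y).1 0) => h1; case: (Req_dec_T (avec U X Y).2 0) => h2.
  - by case: ha; move: h1 h2; case: (avec U X Y) => /= ? ? -> ->.
  - nra.
  - nra.
  - nra.
have e : dist2 U (mvp U X Y s) + dist2 (mvp U X Y s) Y - (dist2 U X + dist2 X Y)
   = 2 * (s ^ 2 - 1) * ((avec U X Y).1 ^ 2 + (avec U X Y).2 ^ 2).
  rewrite /dist2 /dot /vsub /mvp /avec /midp /=; field.
have : s ^ 2 < 1 by nra.
nra.
Qed.

Section Move.
Variables (n : nat) (Z : 'I_n -> point) (zBS : point) (T : FQST Z zBS).
Variables (u x : node n (nS T)).
Hypotheses (hu : u != sink) (hx : x != sink) (hux : par T u = x)
  (hge : fl T x <= fl T u)
  (hd : 0 < dot (vsub (npos T u) (npos T x)) (vsub (npos T (par T x)) (npos T x))).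

Lemma xu2 : x != u.
Proof. apply/eqP => e; have := dist_lt hu; rewrite hux e ltnn //. Qed.

Lemma children_ge z : forall w, w != sink -> par T w = z ->
  fl T w <= \big[Rplus/0]_(w | (w != sink) && (par T w == z)) fl T w.
Proof.
move=> w hw hpw; apply: sum_ge1; first by rewrite hw hpw eqxx.
move=> v /andP[hv _]; have := fl_pos hv; lra.
Qed.

Lemma x_steiner : exists j, x = Some (inr j).
Proof.
case: x hx hge hux => [[i|j]|] // _ hge' hux'; last by exists j.
have h1 := fl_source T i; have h2 := children_ge _ _ hu hux'.
have := fl_pos hu.
move: h1 h2; set S := (bigop _ _ _) => h1 h2.
lra.
Qed.

Lemma only_child w : w != sink -> par T w = x -> w = u.
Proof.
move=> hw hpw; apply/eqP; apply/negPn/negP => hwu.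
case: x_steiner => j ej.
have h := @fl_steiner _ _ _ T j.
have := @sum_ge2 _ (fun v => (v != sink) && (par T v == Some (inr j))) (fl T) u w.
rewrite /= hu hw hux hpw ej eqxx /= => /(_ isT isT).
rewrite eq_sym hwu => /(_ isT).
have hh : (forall v, (v != sink) && (par T v == Some (inr j)) -> 0 <= fl T v).
  by move=> v /andP[hv _]; have := fl_pos hv; lra.
move=> /(_ hh).
rewrite -h -ej; have := fl_pos hw; lra.
Qed.

Lemma fl_eq : fl T x = fl T u.
Proof.
case: x_steiner => j ej.
have h := @fl_steiner _ _ _ T j.
have := children_ge _ _ hu hux; rewrite ej -h -ej; lra.
Qed.

Lemma move_better : exists T' : FQST Z zBS, nS T' = nS T /\ cost T' < cost T.
Proof.
case: x_steiner => j ej.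
set U := npos T u. set X := npos T x. set Y := npos T (par T x).
have han := avec_nz U X Y hd.
case: (@avoid _ sink (npos T) (midp U Y) _ han) => s [hs hav].
set p := mvp U X Y s.
have hp : forall v, p <> npos T v by apply: hav.
pose sp (k : 'I_(nS T)) := if k == j then p else spos T k.
have spinj : injective sp.
  move=> k1 k2; rewrite /sp.
  case: (k1 =P j) => [->|h1]; case: (k2 =P j) => [->|h2] // e.
  - by case: (hp (Some (inr k2))).
  - by case: (hp (Some (inr k1))).
  - exact: (@spos_inj _ _ _ T).
have spZ : forall k i, sp k <> Z i.
  move=> k i; rewrite /sp; case: (k =P j) => _; last exact: (@spos_notZ _ _ _ T).
  exact: (hp (Some (inl i))).
have spS : forall k, sp k <> zBS.
  move=> k; rewrite /sp; case: (k =P j) => _; last exact: (@spos_notsink _ _ _ T).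
  exact: (hp None).
pose T' := @Build_FQST n Z zBS (nS T) sp (par T) (fl T) spinj spZ spS
  (@par_reach _ _ _ T) (@fl_pos _ _ _ T) (@fl_source _ _ _ T)
  (@fl_steiner _ _ _ T) (@fl_sink _ _ _ T).
exists T'; split => //.
have hnp : forall v, npos T' v = if v == x then p else npos T v.
  rewrite ej => v; case: v => [[i|k]|] //=.
have hxu := xu2.
have hpx : par T x != x.
  apply/eqP => e; have := dist_lt hx; rewrite e ltnn //.
rewrite /cost.
have -> : \big[Rplus/0]_(v | v != sink) (fl T' v * dist2 (npos T' v) (npos T' (par T' v))) =
   \big[Rplus/0]_(v | v != sink) (fl T v * dist2 (if v == x then p else npos T v)
        (if par T v == x then p else npos T (par T v))).
  by apply: eq_bigr => v _; rewrite !hnp.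
rewrite (@sum2 _ (fun w => w != sink) _ (fun v => fl T v * dist2 (npos T v) (npos T (par T v))) u x) //;
  last first.
- move=> w hw h1 h2; rewrite (negbTE h2).
  have -> : (par T w == x) = false.
    by apply/eqP => e; rewrite (only_child w hw e) eqxx in h1.
  by [].
- by rewrite eq_sym hxu.
rewrite (eq_sym u x) (negbTE hxu) hux eqxx (negbTE hpx) fl_eq.
rewrite -/U -/X -/Y.
have := geom_lt _ _ _ _ hs hd; rewrite -/U -/X -/Y -/p => hg.
have hfu := fl_pos hu.
set S := bigop _ _ _.
nra.
Qed.

End Move.

Theorem mainTheorem11 (n : nat) (Z : 'I_n -> point) (zBS : point)
  (hn : leq 1 n) (hZ : injective Z) (hsink : forall i, Z i <> zBS)
  (T : FQST Z zBS)
  (hT : (exists k : nat, MFQST_bound k T) \/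
        (exists c : R, 0 < c /\ MFQST_weighted c T))
  (x u : node n (nS T))
  (hx : x != sink) (hu : u != sink) (hux : par T u = x)
  (hne1 : npos T u <> npos T x) (hne2 : npos T x <> npos T (par T x)) :
  PI / 2 <= angle (npos T u) (npos T x) (npos T (par T x)).
Proof.
apply: angle_ge.
case: (Rle_lt_dec (dot (vsub (npos T u) (npos T x)) (vsub (npos T (par T x)) (npos T x))) 0) => // hd.
exfalso.
have [T' [hS hc]] : exists T' : FQST Z zBS, nS T' = nS T /\ cost T' < cost T.
  case: (Rlt_le_dec (fl T u) (fl T x)) => hfl.
  - exact: (reroute_better _ _ _ _ _ _ hu hx hux hfl hd).
  - exact: (move_better _ _ _ _ _ _ hu hx hux hfl hd).
case: hT => [[k [hk hopt]]|[c [hc0 hopt]]].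
- have := hopt T'; rewrite hS => /(_ hk); lra.
- have := hopt T'; rewrite /cost_c hS; lra.
Qed.
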